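(* Let $X$ and $Y$ be real Banach spaces with $Y\neq\{0\}$. Then the adjoint $(\beta_X^Y)^*:X^*\to F_Y(X)^*$ is an isometry.
   Context: $Lip_0(X,Y)$ is the Banach space of Lipschitz maps $f:X\to Y$ with $f(0)=0$ and norm $Lip(f)=\sup_{x\neq y}\|f(x)-f(y)\|/\|x-y\|$. For $x\in X$, $\delta_x^Y\in L(Lip_0(X,Y),Y)$ is evaluation $\delta_x^Y(f)=f(x)$. $F_Y(X)$ is the norm-closed linear span of $\{\delta_x^Y:x\in X\}$ in $L(Lip_0(X,Y),Y)$. $\beta_X^Y:F_Y(X)\to X$ is the bounded linear contraction given on finite combinations by $\beta_X^Y(\sum_{i}\alpha_i\delta_{x_i}^Y)=\sum_i\alpha_ix_i$ and extended by continuity. *)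

(* Defs.v *)
From HB Require Import structures.
From mathcomp Require Import all_boot all_order all_algebra.
From mathcomp Require Import all_classical all_reals all_analysis.
Set Implicit Arguments. Unset Strict Implicit. Unset Printing Implicit Defensive.
Import Order.TTheory GRing.Theory Num.Theory.
Import numFieldNormedType.Exports.
Local Open Scope classical_set_scope.
Local Open Scope ring_scope.

Section LipFree.
Variables (R : realType) (X Y : normedModType R).

Definition lipnorm (f : X -> Y) : \bar R :=
  ereal_sup [set ((`|f p.1 - f p.2| / `|p.1 - p.2|)%:E) | p in [set p : X * X | p.1 != p.2]].

Definition Lip0 : set (X -> Y) :=
  [set f | f 0 = 0 /\ (lipnorm f < +oo)%E].

(* An element of L(Lip_0(X,Y),Y) is represented by a map T : (X -> Y) -> Y,
   of which only the restriction to Lip_0(X,Y) is relevant. *)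
Definition op_norm (T : (X -> Y) -> Y) : \bar R :=
  ereal_sup [set (`|T f|)%:E | f in [set f | Lip0 f /\ (lipnorm f <= 1)%E]].

Definition is_bounded_linear_op (T : (X -> Y) -> Y) : Prop :=
  (forall (a : R) (f g : X -> Y), Lip0 f -> Lip0 g ->
      T (fun x => a *: f x + g x) = a *: T f + T g)
  /\ (op_norm T < +oo)%E.

Definition delta (x : X) : (X -> Y) -> Y := fun f => f x.

Definition delta_comb (s : seq (R * X)) : (X -> Y) -> Y :=
  fun f => \sum_(p <- s) p.1 *: delta p.2 f.

Definition beta_comb (s : seq (R * X)) : X := \sum_(p <- s) p.1 *: p.2.

(* F_Y(X): norm closure in L(Lip_0(X,Y),Y) of the linear span of the delta_x *)
Definition FYX : set ((X -> Y) -> Y) :=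
  [set T | is_bounded_linear_op T /\
     forall e : R, 0 < e -> exists s : seq (R * X),
        (op_norm (fun f => (T f - delta_comb s f)%R) < e%:E)%E].

Definition beta_limit (T : (X -> Y) -> Y) (x : X) : Prop :=
  forall e : R, 0 < e -> exists2 d : R, 0 < d &
    forall s : seq (R * X),
      (op_norm (fun f => (T f - delta_comb s f)%R) < d%:E)%E -> `|x - beta_comb s| < e.

(* beta_X^Y : F_Y(X) -> X, extended by continuity *)
Definition beta (T : (X -> Y) -> Y) : X := xget 0 [set x | beta_limit T x].

(* norm in F_Y(X)^* of the adjoint (beta_X^Y)^* phi = phi \o beta_X^Y *)
Definition adj_beta_norm (phi : X -> R) : \bar R :=
  ereal_sup [set (`|phi (beta T)|)%:E | T in [set T | FYX T /\ (op_norm T <= 1)%E]].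

Definition dual_norm (phi : X -> R) : \bar R :=
  ereal_sup [set (`|phi x|)%:E | x in [set x : X | `|x| <= 1]].

End LipFree.

(* Main.v *)
Require Import Defs.
From HB Require Import structures.
From mathcomp Require Import all_boot all_order all_algebra.
From mathcomp Require Import all_classical all_reals all_analysis.
From mathcomp Require Import lra.
Import Order.TTheory GRing.Theory Num.Theory.
Import numFieldNormedType.Exports.
Local Open Scope classical_set_scope.
Local Open Scope ring_scope.

Section HB.
Variables (R : realType) (X : normedModType R).

Definition okc (n : nat) (x : nat -> X) (c : nat -> R) :=
  forall al : nat -> R, \sum_(i < n) al i * c i <= `| \sum_(i < n) al i *: x i |.

Lemma okc_ext n x c : okc n x c ->
  exists g, okc n.+1 x (fun i => if i == n then g else c i).
Proof.
move=> H.
pose psi (al : nat -> R) := \sum_(i < n) al i * c i.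
pose w (al : nat -> R) := \sum_(i < n) al i *: x i.
pose u := x n.
have psiZ al r : psi (fun i => al i / r) = r^-1 * psi al.
  rewrite /psi mulr_sumr; apply: eq_bigr => i _; rewrite mulrAC mulrC.
  by rewrite mulrA.
have wZ al r : w (fun i => al i / r) = r^-1 *: w al.
  rewrite /w scaler_sumr; apply: eq_bigr => i _; rewrite scalerA mulrC.
  by [].
have key al be : psi al - `|w al - u| <= `|w be + u| - psi be.
  have := H (fun i => al i + be i).
  have -> : \sum_(i < n) (al i + be i) * c i = psi al + psi be.
    by rewrite /psi -big_split /=; apply: eq_bigr => i _; rewrite mulrDl.
  have -> : \sum_(i < n) (al i + be i) *: x i = w al + w be.
    by rewrite /w -big_split /=; apply: eq_bigr => i _; rewrite scalerDl.
  have : `|w al + w be| <= `|w al - u| + `|w be + u|.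
    by rewrite (_ : w al + w be = (w al - u) + (w be + u)) ?ler_normD //;
      rewrite addrACA addNr addr0.
  move=> h1 h2.
  have h3 := le_trans h2 h1.
  lra.
pose S := [set psi al - `|w al - u| | al in [set: nat -> R]].
have hS : has_sup S.
  split; first by exists (psi (fun _ => 0) - `|w (fun _ => 0) - u|); exists (fun _ => 0).
  exists (`|w (fun _ => 0) + u| - psi (fun _ => 0)) => r [al _ <-].
  exact: key.
have lower al : psi al - `|w al - u| <= sup S.
  by apply: sup_upper_bound => //; exists al.
have upper be : sup S <= `|w be + u| - psi be.
  apply: ge_sup; first by case: hS.
  by move=> r [al _ <-]; exact: key.
exists (sup S) => al.
rewrite !big_ord_recr /= eqxx.
have -> : \sum_(i < n) al i * (if (i : nat) == n then sup S else c i) = psi al.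
  by apply: eq_bigr => i _; rewrite ifF // ltn_eqF.
rewrite -/(w al) -/u.
case: (ltrgt0P (al n)) => hl.
- have := upper (fun i => al i / al n); rewrite psiZ wZ.
  have -> : (al n)^-1 *: w al + u = (al n)^-1 *: (w al + al n *: u).
    by rewrite scalerDr scalerA mulVf ?gt_eqF // scale1r.
  rewrite normrZ gtr0_norm ?invr_gt0 // => h.
  have := ler_wpM2l (ltW hl) h.
  rewrite mulrBr !mulrA mulfV ?gt_eqF // !mul1r => h'.
  rewrite mulrC; lra.
- have := lower (fun i => al i / - al n); rewrite psiZ wZ.
  have -> : (- al n)^-1 *: w al - u = (- al n)^-1 *: (w al + al n *: u).
    by rewrite scalerDr scalerA invrN mulNr mulVf ?lt_eqF // scaleN1r.
  rewrite normrZ gtr0_norm ?invr_gt0 ?oppr_gt0 // => h.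
  have hl' : 0 < - al n by rewrite oppr_gt0.
  have := ler_wpM2l (ltW hl') h.
  rewrite mulrBr !mulrA mulfV ?gt_eqF // ?mul1r => h'.
  rewrite mulrC; lra.
- by rewrite hl mul0r scale0r !addr0; exact: H.
Qed.

Lemma okc_exists (x : nat -> X) n :
  exists c : nat -> R, c 0%N = `|x 0%N| /\ okc n.+1 x c.
Proof.
elim: n => [|n [c [c0 hc]]].
  exists (fun _ => `|x 0%N|); split => // al.
  rewrite !big_ord1 normrZ ler_wpM2r //.
  exact: ler_norm.
have [g hg] := okc_ext _ _ _ hc.
by exists (fun i => if i == n.+1 then g else c i).
Qed.

Lemma sum_delta (m i : nat) (F : nat -> R) : (i < m)%N ->
  \sum_(k < m) (if (k : nat) == i then F k else 0) = F i.
Proof.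
move=> hi; rewrite (bigD1 (Ordinal hi)) //= eqxx big1 ?addr0 // => k hk.
rewrite ifF //; apply/negbTE; apply: contra hk => /eqP e; apply/eqP/val_inj.
by rewrite /= e.
Qed.

Lemma sum_deltaX (m i : nat) (F : nat -> X) : (i < m)%N ->
  \sum_(k < m) (if (k : nat) == i then F k else 0) = F i.
Proof.
move=> hi; rewrite (bigD1 (Ordinal hi)) //= eqxx big1 ?addr0 // => k hk.
rewrite ifF //; apply/negbTE; apply: contra hk => /eqP e; apply/eqP/val_inj.
by rewrite /= e.
Qed.

Lemma okc_pt n x c i (s : R) : okc n x c -> (i < n)%N -> s * c i <= `|s *: x i|.
Proof.
move=> H hi; have := H (fun k => if k == i then s else 0).
rewrite (eq_bigr (fun k : 'I_n => if (k : nat) == i then s * c k else 0)); last first.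
  by move=> k _; case: ifP; rewrite ?mul0r.
rewrite (eq_bigr (fun k : 'I_n => if (k : nat) == i then s *: x k else 0)); last first.
  by move=> k _; case: ifP; rewrite ?scale0r.
by rewrite (sum_delta _ _ (fun k => s * c k)) // (sum_deltaX _ _ (fun k => s *: x k)).
Qed.

Lemma okc_2pt n x c i j : okc n x c -> (i < n)%N -> (j < n)%N ->
  c i - c j <= `|x i - x j|.
Proof.
move=> H hi hj; have [->|ne] := eqVneq i j; first by rewrite !subrr normr0.
have := H (fun k => (if k == i then 1 else 0) - (if k == j then 1 else 0)).
rewrite (eq_bigr (fun k : 'I_n => (if (k : nat) == i then c k else 0) -
   (if (k : nat) == j then c k else 0))); last first.
  by move=> k _; rewrite mulrBl; case: ifP; case: ifP; rewrite ?mul0r ?mul1r.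
rewrite (eq_bigr (fun k : 'I_n => (if (k : nat) == i then x k else 0) -
   (if (k : nat) == j then x k else 0))); last first.
  by move=> k _; rewrite scalerBl; case: ifP; case: ifP; rewrite ?scale0r ?scale1r.
by rewrite !sumrB !sum_delta // !sum_deltaX.
Qed.

End HB.
Arguments okc_pt {R X n x c i} s _ _.
Arguments okc_2pt {R X n x c i j} _ _ _.

Section Key.
Variables (R : realType) (X Y : normedModType R).

Definition fmin (b : R) (g : nat -> R) (s : seq nat) :=
  foldr (fun k acc => Num.min acc (g k)) b s.

Lemma fmin_le_base b g s : fmin b g s <= b.
Proof. by elim: s => //= k s IH; rewrite ge_min IH. Qed.

Lemma fmin_le_term b g s k : k \in s -> fmin b g s <= g k.
Proof.
elim: s => //= k' s IH; rewrite in_cons => /orP [/eqP ->|/IH h].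
  by rewrite ge_min lexx orbT.
by rewrite ge_min h.
Qed.

Lemma fmin_ge b g s m : m <= b -> (forall k, k \in s -> m <= g k) -> m <= fmin b g s.
Proof.
move=> hb; elim: s => //= k s IH h; rewrite le_min IH ?h ?mem_head //.
by move=> k' hk'; apply: h; rewrite in_cons hk' orbT.
Qed.

Lemma key (y1 : Y) : `|y1| = 1 -> forall t : seq (R * X),
  (`|beta_comb t|%:E <= op_norm (delta_comb (Y:=Y) t))%E.
Proof.
move=> hy t.
set v := beta_comb t; set n := size t.
pose x k := if k is k'.+1 then (nth (0,0) t k').2 else v.
pose a k := (nth (0,0) t k).1.
have [c [c0 hc]] := okc_exists _ _ x n.
have hv : \sum_(k < n) a k *: x k.+1 = v.
  by rewrite /v /beta_comb (big_nth (0,0)) big_mkord.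
have hsum : \sum_(k < n) a k * c k.+1 = `|v|.
  have h1 := hc (fun k => if k is k'.+1 then a k' else -1).
  have h2 := hc (fun k => if k is k'.+1 then - a k' else 1).
  rewrite !big_ord_recl /= in h1 h2.
  have eb i : bump 0 i = i.+1 by [].
  have hv' : \sum_(i < n) a i *: (nth (0,0) t i).2 = v := hv.
  have hv2 : \sum_(i < n) - a i *: (nth (0,0) t i).2 = - v.
    by rewrite -hv' -sumrN; apply: eq_bigr => i _; rewrite scaleNr.
  have hs2 : \sum_(i < n) - a i * c i.+1 = - \sum_(i < n) a i * c i.+1.
    by rewrite -sumrN; apply: eq_bigr => i _; rewrite mulNr.
  have h1' : -1 * c 0%N + \sum_(i < n) a i * c i.+1 <=
    `|-1 *: v + \sum_(i < n) a i *: (nth (0, 0) t i).2| := h1.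
  have h2' : 1 * c 0%N + \sum_(i < n) - a i * c i.+1 <=
    `|1 *: v + \sum_(i < n) - a i *: (nth (0, 0) t i).2| := h2.
  move: h1' h2'.
  rewrite hv' hv2 hs2 scaleN1r scale1r addNr subrr normr0 c0 => h3 h4.
  lra.
pose F z := fmin `|z| (fun k => c k + `|z - x k|) (iota 0 n.+1).
have hcx j : (j < n.+1)%N -> c j <= `|x j|.
  by move=> hj; have := okc_pt 1 hc hj; rewrite mul1r scale1r.
have hcx' j : (j < n.+1)%N -> - c j <= `|x j|.
  by move=> hj; have := okc_pt (-1) hc hj; rewrite mulN1r scaleN1r normrN.
have hF1 j : (j < n.+1)%N -> F (x j) = c j.
  move=> hj; apply/eqP; rewrite eq_le; apply/andP; split.
    have := fmin_le_term `|x j| (fun k => c k + `|x j - x k|) (iota 0 n.+1) j.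
    by rewrite subrr normr0 addr0; apply; rewrite mem_iota.
  apply: fmin_ge; first exact: hcx.
  move=> k; rewrite mem_iota add0n => /andP [_ hk].
  have := okc_2pt hc hj hk; lra.
have hF0 : F 0 = 0.
  apply/eqP; rewrite eq_le; apply/andP; split.
    have := fmin_le_base `|0 : X| (fun k => c k + `|0 - x k|) (iota 0 n.+1).
    by rewrite /F normr0.
  apply: fmin_ge; first by rewrite normr0.
  move=> k; rewrite mem_iota add0n => /andP [_ hk].
  by rewrite sub0r normrN; have := hcx' k hk; lra.
have hFL z z' : F z' - `|z - z'| <= F z.
  apply: fmin_ge.
    have := fmin_le_base `|z'| (fun k => c k + `|z' - x k|) (iota 0 n.+1).
    have := ler_distD z z' 0; rewrite !subr0 (distrC z' z); rewrite /F; lra.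
  move=> k hk.
  have := fmin_le_term `|z'| (fun k => c k + `|z' - x k|) _ _ hk.
  have := ler_distD z z' (x k); rewrite (distrC z' z) /F; lra.
pose f z := F z *: y1.
have hLip : (lipnorm f <= 1%:E)%E.
  apply: ge_ereal_sup => r [[p1 p2] /= hne <-]; rewrite lee_fin.
  have hp : 0 < `|p1 - p2| by rewrite normr_gt0 subr_eq0.
  rewrite ler_pdivrMr // mul1r /f -scalerBl normrZ hy mulr1 ler_norml.
  have := hFL p1 p2; have := hFL p2 p1; rewrite distrC; lra.
have hf : Lip0 f /\ (lipnorm f <= 1%:E)%E.
  split => //; split; first by rewrite /f hF0 scale0r.
  exact: le_lt_trans hLip (ltry _).
apply: ereal_sup_ubound; exists f => //.
congr (_%:E).
rewrite /delta_comb /delta (big_nth (0,0)) big_mkord.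
rewrite (eq_bigr (fun k : 'I_n => (a k * c k.+1) *: y1)); last first.
  by move=> k _; rewrite /f scalerA (hF1 k.+1) // ltnS.
by rewrite -scaler_suml hsum normrZ hy mulr1 normr_id.
Qed.
End Key.

Section Main.
Variables (R : realType) (X Y : normedModType R).

Lemma op_norm_le (T : (X -> Y) -> Y) r :
  (forall f, Lip0 f -> (lipnorm f <= 1%:E)%E -> `|T f| <= r) -> (op_norm T <= r%:E)%E.
Proof. by move=> h; apply: ge_ereal_sup => _ [f [hf hl] <-]; rewrite lee_fin; exact: h. Qed.

Lemma op_norm_elt (T : (X -> Y) -> Y) f :
  Lip0 f -> (lipnorm f <= 1%:E)%E -> (`|T f|%:E <= op_norm T)%E.
Proof. by move=> hf hl; apply: ereal_sup_ubound; exists f. Qed.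

Lemma delta_le (x : X) (f : X -> Y) :
  Lip0 f -> (lipnorm f <= 1%:E)%E -> `|f x| <= `|x|.
Proof.
move=> [hf0 _] hl; have [->|hx] := eqVneq x 0; first by rewrite hf0 !normr0.
pose p : X * X := (x, 0).
 have : (((`|f p.1 - f p.2| / `|p.1 - p.2|)%R)%:E <= lipnorm f)%E.
  by rewrite /lipnorm; apply: ereal_sup_ubound; exists p => //=.
move=> /le_trans /(_ hl); rewrite lee_fin /= hf0 !subr0.
by rewrite ler_pdivrMr ?normr_gt0 // mul1r.
Qed.

Lemma key' (hY : exists y : Y, y != 0) (t : seq (R * X)) :
  (`|beta_comb t|%:E <= op_norm (delta_comb (Y:=Y) t))%E.
Proof.
case: hY => y hy; apply: (@key R X Y (`|y|^-1 *: y)).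
by rewrite normrZ ger0_norm ?invr_ge0 // mulVf // normr_eq0.
Qed.

Lemma zero_fun (x : X) :
  (fun f : X -> Y => delta x f - delta_comb [:: (1, x)] f) = fun _ => 0.
Proof. by apply: funext => f; rewrite /delta_comb big_seq1 scale1r subrr. Qed.

Lemma op_norm0 : (op_norm (fun _ : X -> Y => (0%R : Y)) <= 0%:E)%E.
Proof. by apply: op_norm_le => f _ _; rewrite normr0. Qed.

Lemma beta_delta (hY : exists y : Y, y != 0) (x : X) : beta (delta (Y:=Y) x) = x.
Proof.
have ex : beta_limit (delta (Y:=Y) x) x.
  move=> e he; exists e => // s hs.
  pose t := (1, x) :: [seq (- p.1, p.2) | p <- s].
  have e1 : delta_comb (Y:=Y) t = (fun f => delta (Y:=Y) x f - delta_comb s f).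
    apply: funext => f; rewrite /delta_comb big_cons big_map scale1r -sumrN.
    by congr (_ + _); apply: eq_bigr => p _ /=; rewrite scaleNr.
  have e2 : beta_comb t = x - beta_comb s.
    rewrite /beta_comb big_cons big_map scale1r -sumrN.
    by congr (_ + _); apply: eq_bigr => p _ /=; rewrite scaleNr.
  have := key' hY t; rewrite e1 e2 => h; rewrite -lte_fin; exact: le_lt_trans h hs.
have hx' : beta_limit (delta (Y:=Y) x) (beta (delta (Y:=Y) x)).
  by rewrite /beta; apply: (xgetI 0 (P := [set x' | beta_limit (delta (Y:=Y) x) x']) ex).
apply/eqP; rewrite -subr_eq0 -normr_le0; apply/ler_addgt0Pr => e he; rewrite add0r.
have [d hd hs] := hx' e he.
have := hs [:: (1, x)]; rewrite /beta_comb big_seq1 scale1r => h; apply/ltW/h.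
by rewrite zero_fun; apply: le_lt_trans op_norm0 _; rewrite lte_fin.
Qed.

Lemma FYX_delta (x : X) : `|x| <= 1 ->
  FYX (delta (Y:=Y) x) /\ (op_norm (delta (Y:=Y) x) <= 1%:E)%E.
Proof.
move=> hx.
have hop : (op_norm (delta (Y:=Y) x) <= 1%:E)%E.
  by apply: op_norm_le => f hf hl; apply: le_trans hx; exact: delta_le.
split => //; split; first split.
- by move=> a f g _ _.
- exact: le_lt_trans hop (ltry _).
- move=> e he; exists [:: (1, x)]; rewrite zero_fun.
  by apply: le_lt_trans op_norm0 _; rewrite lte_fin.
Qed.

End Main.
Arguments op_norm_le {R X Y}.
Arguments op_norm_elt {R X Y}.
Arguments key' {R X Y}.
Arguments beta_delta {R X Y}.
Arguments FYX_delta {R X Y}.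

Theorem mainTheorem7 (R : realType) (X Y : completeNormedModType R)
  (hY : exists y : Y, y != 0) :
  forall phi : {linear X -> R^o}, continuous phi ->
    @adj_beta_norm R X Y phi = dual_norm phi.
Proof.
move=> phi _; apply/eqP; rewrite eq_le; apply/andP; split.
- apply: ge_ereal_sup => _ [T [hT hT1] <-].
  apply: ereal_sup_ubound; exists (beta T) => //.
  case: (pselect (exists x, beta_limit T x)) => [ex|nex]; last first.
    rewrite /beta xgetPN /=; first by rewrite normr0 ler01.
    by move=> x hx; apply: nex; exists x.
  have hb : beta_limit T (beta T).
    by rewrite /beta; apply: (xgetPex 0 (P := [set x | beta_limit T x]) ex).
  set z := beta T in hb *; rewrite /=.
  apply/ler_addgt0Pr => e he.
  have he2 : 0 < e / 2 by rewrite divr_gt0.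
  have [d hd hd'] := hb (e / 2) he2.
  case: hT => [[_ _] happ].
  have hm : 0 < Num.min d (e / 2) by rewrite lt_min hd he2.
  have [s hs] := happ (Num.min d (e / 2)) hm.
  have h1 : `|z - beta_comb s| < e / 2.
    by apply: hd'; apply: lt_le_trans hs _; rewrite lee_fin ge_min lexx.
  have h2 : `|beta_comb s| <= 1 + e / 2.
    have := key' hY s => /le_trans; rewrite -lee_fin; apply.
    apply: op_norm_le => f hf hl.
    have a1 := le_trans (op_norm_elt T f hf hl) hT1.
    have a2 := le_lt_trans (op_norm_elt (fun f => T f - delta_comb s f) f hf hl) hs.
    rewrite lee_fin in a1; rewrite lte_fin lt_min in a2; case/andP: a2 => _ a2.
    have : delta_comb s f = T f - (T f - delta_comb s f) by rewrite subKr.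
    move=> ->; apply: le_trans (ler_normB _ _) _; lra.
  have : `|z| <= `|z - beta_comb s| + `|beta_comb s|.
    by rewrite -{1}(subrK (beta_comb s) z) ler_normD.
  lra.
- apply: ereal_sup_le => _ [x hx <-].
  exists (delta (Y:=Y) x); first exact: FYX_delta.
  by rewrite beta_delta.
Qed.
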